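(* In the two-valued atomic model under the Shapley scheme, consider a winning pool $S$ consisting of one large player (player $1$, stake $a$) and $k$ small players (stake $1$). If $k<h$, then $\phi_1(S)=\frac{k-h+a+1}{k+1}$ and each small player in $S$ receives $\frac{h-a}{k(k+1)}$. If $k\ge h$, then $\phi_1(S)=\frac{a}{k+1}$ and each small player in $S$ receives $\frac{k+1-a}{k(k+1)}$.
   Context: Atomic model with threshold $h$; every player has stake either $1$ (small) or $a$ (large), where $h,a$ are integers with $2\le a\le h-1$. A pool $S$ has reward $\rho(S)=1$ if its total stake is at least $h$ (winning) and $0$ otherwise. Shapley scheme: player $i$ in pool $S$ receives $\phi_i(S)=\sum_{T\subseteq S\setminus\{i\}}\frac{|T|!(|S|-|T|-1)!}{|S|!}(\rho(T\cup\{i\})-\rho(T))$. *)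

(* Defs.v *)
From HB Require Import structures.
From mathcomp Require Import all_boot all_order all_algebra.
Set Implicit Arguments. Unset Strict Implicit. Unset Printing Implicit Defensive.
Import Order.TTheory GRing.Theory Num.Theory.
Local Open Scope ring_scope.

Definition stake (P : finType) (w : P -> nat) (S : {set P}) : nat :=
  (\sum_(i in S) w i)%N.

Definition rho (P : finType) (w : P -> nat) (h : nat) (S : {set P}) : rat :=
  if (h <= stake w S)%N then 1 else 0.

Definition shapley (P : finType) (w : P -> nat) (h : nat) (S : {set P}) (i : P) : rat :=
  \sum_(T in powerset (S :\ i))
     (((#|T| `! * (#|S| - #|T| - 1) `!)%N)%:R / (#|S| `!)%:R)
       * (rho w h (i |: T) - rho w h T).

(* Main.v *)
Require Import Defs.
From mathcomp Require Import all_boot all_order all_algebra.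
From mathcomp Require Import zify ring lra.
Import Order.TTheory GRing.Theory Num.Theory.
Local Open Scope ring_scope.

Lemma sum_powerset_card (T : finType) (U : {set T}) (F : nat -> rat) :
  \sum_(X in powerset U) F #|X| = \sum_(t < #|U|.+1) ('C(#|U|, t))%:R * F t.
Proof.
transitivity (\sum_(X in powerset U) \sum_(t < #|U|.+1) ((#|X| == t)%N)%:R * F t).
  apply: eq_bigr => X; rewrite inE => XU.
  have hX : (#|X| < #|U|.+1)%N by rewrite ltnS subset_leq_card.
  rewrite (bigD1 (Ordinal hX)) //= eqxx mul1r big1 ?addr0 // => i /= hi.
  suff -> : (#|X| == i) = false by rewrite mul0r.
  by apply/negbTE; apply: contra hi => /eqP e; apply/eqP/val_inj.
rewrite exchange_big; apply: eq_bigr => t _.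
rewrite -big_distrl /= -natr_sum; congr (_%:R * _).
move: (nat_of_ord t) => m; rewrite -(cards_draws U m) -sum1_card big_mkcond [RHS]big_mkcond /=.
by apply: eq_bigr => X _; rewrite !inE; case: (X \subset U); case: (#|X| == t).
Qed.

Lemma sum_powerset_split (T : finType) (V : {set T}) x (F : {set T} -> rat) :
  x \notin V ->
  \sum_(X in powerset (x |: V)) F X = \sum_(X in powerset V) (F X + F (x |: X)).
Proof.
move=> xV; rewrite big_split /= [LHS](bigID (fun X : {set T} => x \in X)) /= addrC.
congr (_ + _).
  apply: eq_bigl => X; rewrite !inE.
  apply/andP/idP => [[XU xX]|XV].
    apply/subsetP => y yX; have := subsetP XU y yX; rewrite !inE.
    by case/orP => // /eqP e; move: xX; rewrite -e yX.
  split; first by apply: (subset_trans XV); apply: subsetUr.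
  by apply: contra xV => xX; apply: (subsetP XV).
rewrite (reindex_onto (fun X => x |: X) (fun X => X :\ x)) /=.
  apply: eq_bigl => Y; rewrite !inE eqxx andbT.
  apply/andP/idP => [[h1 /eqP h2]|YV].
    rewrite -h2; apply/subsetP => y; rewrite !inE => /andP [ny]; rewrite (negbTE ny) /= => yY.
    have := subsetP h1 y; rewrite !inE yY orbT => /(_ isT).
    by case/orP => // /eqP e; rewrite e eqxx in ny.
  have xY : x \notin Y by apply: contra xV => xY; apply: (subsetP YV).
  split; first by apply: setUS.
  apply/eqP; rewrite setDUl setDv set0U; apply/setP => y; rewrite !inE.
  by case: (y =P x) => [->|]; rewrite ?(negbTE xY).
by move=> X /andP [_ xX]; rewrite setD1K.
Qed.

Lemma sum_ge (n m : nat) :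
  \sum_(t < n) ((m <= t)%N)%:R = ((n - m)%N)%:R :> rat.
Proof.
elim: n => [|n IH]; first by rewrite big_ord0 sub0n.
rewrite big_ord_recr /= IH; case: (leqP m n) => hm.
  by rewrite -natrD; congr (_%:R); lia.
by rewrite addr0; congr (_%:R); lia.
Qed.

Lemma sum_ind (n c : nat) (f : nat -> rat) :
  \sum_(t < n) (((t : nat) == c)%N)%:R * f t = if (c < n)%N then f c else 0.
Proof.
elim: n => [|n IH]; first by rewrite big_ord0.
rewrite big_ord_recr /= IH.
case: (ltngtP n c) => hc.
- rewrite mul0r addr0 ifF //; apply/negbTE; rewrite -leqNgt; lia.
- rewrite mul0r addr0 ifT //; lia.
- by rewrite hc ltnSn mul1r add0r.
Qed.

Lemma rhoE (P : finType) (w : P -> nat) h (X : {set P}) :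
  rho w h X = ((h <= stake w X)%N)%:R.
Proof. by rewrite /rho; case: ifP. Qed.

Lemma stakeU1 (P : finType) (w : P -> nat) (y : P) (X : {set P}) :
  y \notin X -> stake w (y |: X) = (w y + stake w X)%N.
Proof. by move=> yX; rewrite /stake big_setU1. Qed.

Lemma stake_small (P : finType) (w : P -> nat) (X : {set P}) :
  (forall i, i \in X -> w i = 1%N) -> stake w X = #|X|.
Proof. by move=> H; rewrite /stake -sum1_card; apply: eq_bigr. Qed.

Lemma p1_value (P : finType) (w : P -> nat) (h a : nat)
  (S : {set P}) (p1 : P) (k : nat)
  (hp1S : p1 \in S) (hp1 : w p1 = a)
  (hsmall : forall j, j \in S -> j != p1 -> w j = 1%N)
  (hcard : #|S| = k.+1) :
  shapley w h S p1 = (((k.+1 - (h - a))%N)%:R - ((k.+1 - h)%N)%:R) / (k%:R + 1).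
Proof.
have hV : #|S :\ p1| = k by move: hcard; rewrite (cardsD1 p1) hp1S => -[].
rewrite /shapley hcard.
pose G := (fun t : nat => ((t`! * (k.+1 - t - 1)`!)%N)%:R / ((k.+1)`!)%:R *
      (((h <= a + t)%N)%:R - ((h <= t)%N)%:R) : rat).
transitivity (\sum_(T in powerset (S :\ p1)) G #|T|).
  apply: eq_bigr => T; rewrite inE => TS.
  have p1T : p1 \notin T by apply/negP => /(subsetP TS); rewrite !inE eqxx.
  have st : stake w T = #|T|.
    apply: stake_small => i iT; have := subsetP TS i iT; rewrite !inE.
    by case/andP => ip iS; apply: hsmall.
  by rewrite /G !rhoE stakeU1 // st hp1.
rewrite sum_powerset_card hV.
transitivity (\sum_(t < k.+1) (((h - a <= t)%N)%:R - ((h <= t)%N)%:R) / (k%:R + 1) : rat).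
  apply: eq_bigr => t _; rewrite /G.
  have tk : (t <= k)%N by rewrite -ltnS.
  rewrite leq_subLR.
  have e1 : (k.+1 - t - 1 = k - t)%N by lia.
  rewrite e1 factS.
  have hb := bin_fact tk.
  have hc : ('C(k, t)%:R * ((t`! * (k - t)`!)%N)%:R : rat) = (k`!)%:R by rewrite -natrM hb.
  have hK : ((k`!)%:R : rat) != 0 by rewrite pnatr_eq0 -lt0n fact_gt0.
  rewrite !mulrA hc natrM.
  have hk1 : ((k.+1)%:R : rat) = k%:R + 1 by rewrite -addn1 natrD.
  rewrite hk1.
  have hk0 : (k%:R + 1 : rat) != 0 by rewrite -hk1 pnatr_eq0.
  move: (_ - _) => X; move: (k`!%:R : rat) hK => K hK; move: (k%:R : rat) hk0 => r hr. by field; rewrite hK hr.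
rewrite -mulr_suml sumrB !sum_ge.
done.
Qed.

Lemma ind_step (m t : nat) : (0 < m)%N ->
  (((m <= t.+1)%N)%:R - ((m <= t)%N)%:R : rat) = ((t == m - 1)%N)%:R.
Proof.
move=> m0; case: (ltngtP t (m - 1)) => ht.
- have -> : (m <= t.+1)%N = false by lia.
  have -> : (m <= t)%N = false by lia.
  by rewrite subrr.
- have -> : (m <= t.+1)%N = true by lia.
  have -> : (m <= t)%N = true by lia.
  by rewrite subrr.
- have -> : (m <= t.+1)%N = true by lia.
  have -> : (m <= t)%N = false by lia.
  by rewrite subr0.
Qed.

Lemma natS (n : nat) : (n.+1%:R : rat) = n%:R + 1.
Proof. by rewrite -addn1 natrD. Qed.

Lemma j_value (P : finType) (w : P -> nat) (h a : nat)
  (hah : (a < h)%N)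
  (S : {set P}) (p1 : P) (k : nat)
  (hp1S : p1 \in S) (hp1 : w p1 = a)
  (hsmall : forall j, j \in S -> j != p1 -> w j = 1%N)
  (hcard : #|S| = k.+2) (j : P) (jS : j \in S) (jp : j != p1) :
  shapley w h S j =
    (if (h - 1 < k.+1)%N then ((k.+1 - (h - 1))%N)%:R else 0) / ((k.+1)%:R * ((k.+1)%:R + 1))
  + (if (h - a - 1 < k.+1)%N then ((h - a - 1).+1)%:R else 0) / ((k.+1)%:R * ((k.+1)%:R + 1)).
Proof.
set V := S :\ j :\ p1.
have p1Sj : p1 \in S :\ j by rewrite !inE eq_sym jp.
have eSj : S :\ j = p1 |: V by rewrite setD1K.
have p1V : p1 \notin V by rewrite !inE eqxx.
have jV : j \notin V by rewrite !inE eqxx andbF.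
have hV : #|V| = k.
  move: hcard; rewrite (cardsD1 j) jS => -[]; rewrite (cardsD1 p1) p1Sj => -[].
  done.
have VS : forall i, i \in V -> i \in S /\ i != p1 /\ i != j.
  by move=> i; rewrite !inE => /and3P [].
pose wt := (fun m : nat => ((m`! * (k.+2 - m - 1)`!)%N)%:R / ((k.+2)`!)%:R : rat).
pose Hf := (fun t : nat => wt t * (((h <= t.+1)%N)%:R - ((h <= t)%N)%:R) +
   wt t.+1 * (((h <= a + t.+1)%N)%:R - ((h <= a + t)%N)%:R)).
rewrite /shapley hcard eSj sum_powerset_split //.
transitivity (\sum_(T in powerset V) Hf #|T|).
  apply: eq_bigr => T; rewrite inE => TV.
  have p1T : p1 \notin T by apply/negP => /(subsetP TV); rewrite (negbTE p1V).
  have jT : j \notin T by apply/negP => /(subsetP TV); rewrite (negbTE jV).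
  have jpT : j \notin p1 |: T by rewrite !inE negb_or jp jT.
  have st : stake w T = #|T|.
    apply: stake_small => i /(subsetP TV) /VS [iS [ip _]]; exact: hsmall.
  have wj : w j = 1%N by apply: hsmall.
  rewrite !rhoE (@stakeU1 _ w _ _ jT) (@stakeU1 _ w _ _ jpT) (@stakeU1 _ w _ _ p1T) st wj hp1.
  rewrite cardsU1 p1T /Hf /wt add1n.
  by rewrite !add1n addnS.
rewrite sum_powerset_card hV.
pose D := ((k.+1)%:R * ((k.+1)%:R + 1) : rat).
pose f1 := (fun t : nat => (k.+1 - t)%N%:R / D).
pose f2 := (fun t : nat => (t.+1)%:R / D).
transitivity (\sum_(t < k.+1) ((((t : nat) == h - 1)%N)%:R * f1 t
                 + (((t : nat) == h - a - 1)%N)%:R * f2 t)).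
  apply: eq_bigr => t _; rewrite /Hf /wt /f1 /f2.
  have tk : (t <= k)%N by rewrite -ltnS.
  rewrite ind_step; last by lia.
  rewrite -(leq_subLR h a t.+1) -(leq_subLR h a t) ind_step; last by lia.
  have e1 : (k.+2 - t - 1 = (k - t).+1)%N by lia.
  have e2 : (k.+2 - t.+1 - 1 = (k - t))%N by lia.
  have e3 : (k.+1 - t = (k - t).+1)%N by lia.
  rewrite e1 e2 e3 !factS.
  have hc : ('C(k, t)%:R * ((t`!)%:R * ((k - t)`!)%:R) : rat) = (k`!)%:R
    by rewrite -!natrM bin_fact.
  rewrite !natrM -hc /D.
  have c0 : ('C(k, t)%:R : rat) != 0 by rewrite pnatr_eq0 -lt0n bin_gt0.
  have A0 : ((t`!)%:R : rat) != 0 by rewrite pnatr_eq0 -lt0n fact_gt0.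
  have B0 : (((k - t)`!)%:R : rat) != 0 by rewrite pnatr_eq0 -lt0n fact_gt0.
  rewrite !natS.
  have k1 : (k%:R + 1 : rat) != 0 by rewrite -natS pnatr_eq0.
  have k2 : (k%:R + 1 + 1 : rat) != 0 by rewrite -!natS pnatr_eq0.
  by field; rewrite k2 k1 B0 A0 c0.
rewrite big_split /= !sum_ind /f1 /f2 /D.
by case: ifP; case: ifP; rewrite ?mul0r.
Qed.

Lemma castE (x y z : nat) : (x + y = z)%N -> (x%:R : rat) = z%:R - y%:R.
Proof. by move=> <-; rewrite natrD addrK. Qed.

Theorem lemma3p7 (P : finType) (w : P -> nat) (h a : nat)
  (ha2 : (2 <= a)%N) (hah : (a <= h - 1)%N)
  (hw : forall i : P, w i = 1%N \/ w i = a)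
  (S : {set P}) (p1 : P) (k : nat)
  (hp1S : p1 \in S) (hp1 : w p1 = a)
  (hsmall : forall j, j \in S -> j != p1 -> w j = 1%N)
  (hcard : #|S| = k.+1)
  (hwin : rho w h S = 1) :
  ((k < h)%N ->
     shapley w h S p1 = (k%:R - h%:R + a%:R + 1) / (k%:R + 1) /\
     (forall j, j \in S -> j != p1 ->
        shapley w h S j = (h%:R - a%:R) / (k%:R * (k%:R + 1))))
  /\
  ((h <= k)%N ->
     shapley w h S p1 = a%:R / (k%:R + 1) /\
     (forall j, j \in S -> j != p1 ->
        shapley w h S j = (k%:R + 1 - a%:R) / (k%:R * (k%:R + 1)))).
Proof.
have ah : (a < h)%N by lia.
have hV : #|S :\ p1| = k by move: hcard; rewrite (cardsD1 p1) hp1S => -[].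
have win : (h <= a + k)%N.
  move: hwin; rewrite rhoE -(setD1K hp1S) (@stakeU1 _ w _ _); last by rewrite !inE eqxx.
  rewrite hp1 (@stake_small _ w (S :\ p1)) ?hV.
    by case: (h <= a + k)%N => // /eqP; rewrite eq_sym oner_eq0.
  by move=> i; rewrite !inE => /andP [ip iS]; apply: hsmall.
have [k' ek] : exists k', k = k'.+1 by exists k.-1; lia.
have P1 := @p1_value _ w h a S p1 k hp1S hp1 hsmall hcard.
have hc2 : #|S| = k'.+2 by rewrite hcard ek.
have J := fun j jS jp => @j_value _ w h a ah S p1 k' hp1S hp1 hsmall hc2 j jS jp.
split => hk.
  split.
    rewrite P1.
    have -> : (k.+1 - h = 0)%N by lia.
    rewrite (@castE (k.+1 - (h - a)) h (k + a + 1)); last by lia.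
    rewrite !natrD; congr (_ / _); lra.
  move=> j jS jp; rewrite J // ek.
  rewrite ifF; last by apply/negbTE; lia.
  rewrite ifT; last by lia.
  rewrite (@castE (h - a - 1).+1 a h); last by lia.
  by rewrite mul0r add0r.
split.
  rewrite P1.
  rewrite (@castE (k.+1 - (h - a)) 0 ((k.+1 - h) + a)); last by lia.
  rewrite natrD; congr (_ / _); lra.
move=> j jS jp; rewrite J // ek.
rewrite !ifT; try lia.
rewrite -mulrDl -natrD.
rewrite (@castE ((k'.+1 - (h - 1)) + (h - a - 1).+1) a k'.+2); last by lia.
by rewrite !natS.
Qed.
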